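(* For every integer $m\ge 0$, there exist an NFA with $m+1$ states and a DFA with two states, both over an alphabet of cardinality $m+1$, such that there is a tower of height $2^{m+1}$ between their languages and there is no infinite tower between their languages.
   Context: For strings $v=a_1\cdots a_k$ and $w$, $v\preccurlyeq w$ if $w\in\Sigma^*a_1\Sigma^*a_2\Sigma^*\cdots\Sigma^*a_k\Sigma^*$. A sequence $(w_i)_{i=1}^r$ of strings is a tower between languages $K$ and $L$ if $w_1\in K\cup L$ and for all $i=1,\dots,r-1$: $w_i\preccurlyeq w_{i+1}$, $w_i\in K$ implies $w_{i+1}\in L$, and $w_i\in L$ implies $w_{i+1}\in K$; $r$ is its height. An infinite tower is an infinite sequence with the same properties. *)

(* Defs.v *)
From mathcomp Require Import all_boot.
Set Implicit Arguments. Unset Strict Implicit. Unset Printing Implicit Defensive.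

(* Words over an alphabet A are [seq A].  The subsequence (scattered subword)
   order  v ≼ w  is MathComp's [subseq v w]. *)

Record nfa (A : finType) (n : nat) := NFA {
  nfa_init  : {set 'I_n};
  nfa_final : {set 'I_n};
  nfa_trans : 'I_n -> A -> {set 'I_n}
}.

Definition nfa_run (A : finType) n (M : nfa A n) (S : {set 'I_n}) (w : seq A)
  : {set 'I_n} :=
  foldl (fun (S : {set 'I_n}) (a : A) => \bigcup_(q in S) nfa_trans M q a) S w.

Definition nfa_lang (A : finType) n (M : nfa A n) (w : seq A) : Prop :=
  [exists q in nfa_run M (nfa_init M) w, q \in nfa_final M].

Record dfa (A : finType) (n : nat) := DFA {
  dfa_init  : 'I_n;
  dfa_final : {set 'I_n};
  dfa_trans : 'I_n -> A -> 'I_n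
}.

Definition dfa_run (A : finType) n (M : dfa A n) (q : 'I_n) (w : seq A) : 'I_n :=
  foldl (dfa_trans M) q w.

Definition dfa_lang (A : finType) n (M : dfa A n) (w : seq A) : Prop :=
  dfa_run M (dfa_init M) w \in dfa_final M.

Definition tower_step (A : eqType) (K L : seq A -> Prop) (u v : seq A) : Prop :=
  subseq u v /\ (K u -> L v) /\ (L u -> K v).

(* A (finite) tower w_1, ..., w_r between K and L; its height is [size ws]. *)
Definition is_tower (A : eqType) (K L : seq A -> Prop) (ws : seq (seq A)) : Prop :=
  0 < size ws /\
  (K (nth [::] ws 0) \/ L (nth [::] ws 0)) /\
  forall i, i.+1 < size ws -> tower_step K L (nth [::] ws i) (nth [::] ws i.+1).

Definition is_inf_tower (A : eqType) (K L : seq A -> Prop) (w : nat -> seq A) : Prop :=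
  (K (w 0) \/ L (w 0)) /\ forall i, tower_step K L (w i) (w i.+1).

(* Main.v *)
Require Import Defs.
From mathcomp Require Import all_boot.
From mathcomp Require Import zify.
Set Implicit Arguments. Unset Strict Implicit. Unset Printing Implicit Defensive.

Fixpoint acc (m : nat) (q : nat) (w : seq 'I_m.+1) : bool :=
  match w with
  | [::] => q == 0
  | a :: w' => if a < q then acc q w'
               else (a == q :> nat) && [exists j : 'I_m.+1, (j < q) && acc j w']
  end.

Definition mx (m : nat) (w : seq 'I_m.+1) : nat := foldr (fun (a : 'I_m.+1) n => maxn a n) 0 w.

Fixpoint V (m : nat) (q : nat) (w : seq 'I_m.+1) : nat :=
  match w with
  | [::] => 0
  | a :: w' => if a < q then V q w' else 2 ^ q + V (mx w') w'
  end.

Definition vl (m : nat) (w : seq 'I_m.+1) := V (mx w) w.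

Definition trN (m : nat) (q a : 'I_m.+1) : {set 'I_m.+1} :=
  if a < q then [set q] else if (a == q :> nat) then [set j : 'I_m.+1 | j < q] else set0.

Definition NN (m : nat) : nfa 'I_m.+1 m.+1 := @NFA _ _ setT [set ord0] (@trN m).

Definition DD (m : nat) : dfa 'I_m.+1 2 :=
  @DFA _ _ ord0 [set ord_max] (fun _ (a : 'I_m.+1) => if (a == 0 :> nat) then ord_max else ord0).

Lemma run_acc m (S : {set 'I_m.+1}) w :
  (ord0 \in nfa_run (NN m) S w) = [exists q in S, acc q w].
Proof.
elim: w S => [|a w IH] S /=.
  rewrite /nfa_run /=; apply/idP/existsP => [H|[q /andP[Hq /eqP Hq0]]].
    by exists ord0; rewrite H eqxx.
  have E : q = ord0 by apply: val_inj; rewrite /= Hq0.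
  by rewrite -E.
rewrite /nfa_run /= -/(nfa_run _ _ _) IH.
apply/existsP/existsP => [[q' /andP[/bigcupP[q Hq Hq'] Hacc]]|[q /andP[Hq Hacc]]].
  exists q; rewrite Hq /=; move: Hq'; rewrite /= /trN.
  case: ifP => Haq.
    by rewrite inE => /eqP <-.
  case: ifP => Haq2; last by rewrite inE.
  rewrite inE => Hlt; apply/existsP; exists q'; by rewrite Hlt.
move: Hacc; case: ifP => Haq.
  move=> H; exists q; rewrite H andbT; apply/bigcupP; exists q => //.
  by rewrite /= /trN Haq inE.
case/andP=> Haq2 /existsP[j /andP[Hj Hacc]].
exists j; rewrite Hacc andbT; apply/bigcupP; exists q => //.
by rewrite /= /trN Haq Haq2 inE.
Qed.

Lemma nlang m w : nfa_lang (NN m) w <-> exists q : 'I_m.+1, acc q w.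
Proof.
rewrite /nfa_lang; split.
  case/existsP=> q /andP[Hq]; rewrite inE => /eqP Hq0; subst q.
  by move: Hq; rewrite run_acc => /existsP[q /andP[_ H]]; exists q.
case=> q H; apply/existsP; exists ord0; rewrite inE eqxx andbT run_acc.
by apply/existsP; exists q; rewrite inE.
Qed.

Lemma dlang m w : dfa_lang (DD m) w <-> exists s, w = rcons s ord0.
Proof.
rewrite /dfa_lang; case/lastP: w => [|s a].
  split; first by rewrite inE.
  by case=> s; case: s.
rewrite /dfa_run foldl_rcons /= inE; split.
  case: ifP => Ha; last by rewrite eqE /=.
  by move=> _; exists s; congr rcons; apply: val_inj; apply/eqP.
case=> s' /eqP; rewrite eqseq_rcons => /andP[_ /eqP ->] /=; by rewrite eqxx.
Qed.

Lemma mx_cons m (a : 'I_m.+1) w : mx (a :: w) = maxn a (mx w).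
Proof. by []. Qed.

Lemma mx_ge m (w : seq 'I_m.+1) b : b \in w -> b <= mx w.
Proof.
elim: w => [|a w IH] //=; rewrite inE => /orP[/eqP ->|H].
  by rewrite leq_maxl.
by apply: leq_trans (IH H) _; rewrite leq_maxr.
Qed.

Lemma mx_ub m (w : seq 'I_m.+1) M : (forall b, b \in w -> b <= M) -> mx w <= M.
Proof.
elim: w => [|a w IH] H //=; rewrite geq_max H ?mem_head //=.
by apply: IH => b Hb; apply: H; rewrite inE Hb orbT.
Qed.

Lemma mx_sub m (x y : seq 'I_m.+1) : subseq x y -> mx x <= mx y.
Proof. by move=> H; apply: mx_ub => b Hb; apply: mx_ge; apply: (mem_subseq H). Qed.

Lemma mx_le_m m (w : seq 'I_m.+1) : mx w <= m.
Proof. by apply: mx_ub => b _; rewrite -ltnS. Qed.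

Lemma acc_mx m q (w : seq 'I_m.+1) : acc q w -> mx w = q.
Proof.
elim: w q => [|a w IH] q /=; first by move/eqP ->.
case: ifP => Haq.
  by move=> /IH ->; apply/maxn_idPr; apply: ltnW.
case/andP=> /eqP Haq2 /existsP[j /andP[Hj /IH ->]].
by rewrite Haq2; apply/maxn_idPl; apply: ltnW.
Qed.

Lemma acc0 m (w : seq 'I_m.+1) : acc 0 w -> w = [::].
Proof.
case: w => [|a w] //= /andP[_ /existsP[j]] //.
Qed.

Lemma acc_last m q (a : 'I_m.+1) w : acc q (a :: w) -> 0 < last a w.
Proof.
elim: w q a => [|b w IH] q a /=.
  case: ifP => Haq; first by move/eqP => Hq; rewrite Hq in Haq.
  by case/andP=> /eqP -> /existsP[j /andP[Hj _]]; apply: leq_ltn_trans Hj.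
case: ifP => Haq; first by move/IH.
by case/andP=> _ /existsP[j /andP[_ /IH]].
Qed.

Lemma V_bound m q (w : seq 'I_m.+1) : acc q w -> V q w < 2 ^ q.+1.
Proof.
elim: w q => [|a w IH] q /=; first by move=> _; rewrite expn_gt0.
case: ifP => Haq; first by move/IH.
case/andP=> _ /existsP[j /andP[Hj Hacc]].
rewrite (acc_mx Hacc).
have := IH _ Hacc.
have : 2 ^ j.+1 <= 2 ^ q by rewrite leq_exp2l.
rewrite !expnS; lia.
Qed.

Lemma decomp m q (w : seq 'I_m.+1) : acc q w -> 0 < q ->
  exists X a Y, w = X ++ a :: Y /\ (a : nat) = q /\ all (fun b : 'I_m.+1 => b < q) X
    /\ acc (mx Y) Y /\ mx Y < q /\ V q w = 2 ^ q + V (mx Y) Y.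
Proof.
elim: w => [|a w IH] /=; first by move/eqP ->.
case: ifP => Haq.
  move=> /IH H /H [X [b [Y [E [Hb [HX [HY [HmY HV]]]]]]]].
  exists (a :: X), b, Y; rewrite E /= Haq HX; do !split => //.
  by rewrite -E.
case/andP=> /eqP Haq2 /existsP[j /andP[Hj Hacc]] _.
have Hm := acc_mx Hacc.
exists [::], a, w; rewrite Hm; do !split => //.
Qed.

Lemma subseq_split (T : eqType) (c : T) A1 A2 B1 B2 :
  c \notin A1 -> c \notin B1 -> subseq (A1 ++ c :: A2) (B1 ++ c :: B2) -> subseq A2 B2.
Proof.
elim: B1 A1 => [|b B1 IH] A1 HA HB /=.
  case: A1 HA => [|a A1] HA /=; first by rewrite eqxx.
  case: ifP => Hac.
    by move: HA; rewrite (eqP Hac) mem_head.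
  move=> H; apply: subseq_trans H; apply: subseq_trans (suffix_subseq (a :: A1) _).
  exact: subseq_cons.
move: HB; rewrite inE negb_or => /andP[Hcb HB].
case: A1 HA => [|a A1] HA /=.
  by rewrite (negbTE Hcb); apply: (IH [::]).
case: ifP => Hab.
  by apply: IH => //; move: HA; rewrite inE negb_or => /andP[].
by apply: (IH (a :: A1)).
Qed.

Lemma split_first (T : eqType) (c : T) z : c \in z ->
  exists Z1 Z2, z = Z1 ++ c :: Z2 /\ c \notin Z1.
Proof.
move=> Hc; exists (take (index c z) z), (drop (index c z).+1 z); split.
  by rewrite -drop_index // cat_take_drop.
by rewrite in_take_leq ?index_size // ltnn.
Qed.

Lemma vl_pos m (y : seq 'I_m.+1) : acc (mx y) y -> y != [::] -> 0 < mx y /\ 2 ^ mx y <= vl y.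
Proof.
move=> H Hy.
have Hk : 0 < mx y.
  by case: (posnP (mx y)) => // E; move: H; rewrite E => /acc0 E2; rewrite E2 in Hy.
split=> //; have [X [a [Y [_ [_ [_ [_ [_ HV]]]]]]]] := decomp H Hk.
by rewrite /vl HV leq_addr.
Qed.

Lemma main m n : forall x y z : seq 'I_m.+1, mx y <= n -> acc (mx x) x -> acc (mx y) y ->
  subseq x z -> subseq z y -> z != [::] -> (last ord0 z : nat) = 0 -> vl x < vl y.
Proof.
elim: n => [|n IH] x y z Hn Hx Hy Hxz Hzy Hz Hl.
  have Hy0 : y != [::] by apply: contraNneq Hz => E; move: Hzy; rewrite E subseq0.
  by have [Hk _] := vl_pos Hy Hy0; move: Hn Hk; lia.
have Hy0 : y != [::] by apply: contraNneq Hz => E; move: Hzy; rewrite E subseq0.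
have [Hky Hvy] := vl_pos Hy Hy0.
case: (eqVneq x [::]) => Hx0.
  by rewrite Hx0 /vl /=; apply: leq_trans Hvy; rewrite expn_gt0.
have [Hkx Hvx] := vl_pos Hx Hx0.
have Hxy : mx x <= mx y by apply: mx_sub; apply: subseq_trans Hzy.
case: (ltnP (mx x) (mx y)) => Hlt.
  have := V_bound Hx; rewrite -/(vl x) => Hb.
  apply: (leq_trans Hb); apply: leq_trans Hvy; by rewrite leq_exp2l.
have Hk : mx x = mx y by apply/eqP; rewrite eqn_leq Hxy Hlt.
have [X1 [a [X2 [Ex [Ha [HX1 [HX2 [HmX2 HVx]]]]]]]] := decomp Hx Hkx.
have [Y1 [b [Y2 [Ey [Hb [HY1 [HY2 [HmY2 HVy]]]]]]]] := decomp Hy Hky.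
have Eab : a = b by apply: val_inj; rewrite /= Ha Hb.
subst b.
have Hnot : forall W, all (fun c : 'I_m.+1 => c < mx x) W -> a \notin W.
  move=> W HW; apply/negP => Hin; move/allP: HW => /(_ _ Hin); by rewrite Ha ltnn.
have Haz : a \in z by apply: (mem_subseq Hxz); rewrite Ex mem_cat mem_head orbT.
have [Z1 [Z2 [Ez HZ1]]] := split_first Haz.
have S1 : subseq X2 Z2 by apply: (subseq_split (Hnot _ HX1) HZ1); rewrite -Ex -Ez.
have S2 : subseq Z2 Y2.
  apply: (subseq_split HZ1 (Hnot Y1 _)); first by rewrite Hk.
  by rewrite -Ez -Ey.
have HZ2 : Z2 != [::].
  apply/eqP => E; move: Hl; rewrite Ez E last_cat /= Ha => E2; by rewrite E2 in Hkx.
have HlZ : (last ord0 Z2 : nat) = 0.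
  move: Hl; rewrite Ez last_cat; case: Z2 HZ2 {S1 S2 Ez} => // c Z2 _ /=.
have := IH X2 Y2 Z2 _ HX2 HY2 S1 S2 HZ2 HlZ.
have -> : vl x = 2 ^ mx x + vl X2 by rewrite /vl HVx.
have -> : vl y = 2 ^ mx y + vl Y2 by rewrite /vl HVy.
rewrite Hk ltn_add2l; apply; rewrite -ltnS; exact: leq_trans HmY2 _.
Qed.

Fixpoint u (m k : nat) : seq 'I_m.+1 :=
  match k with
  | 0 => [:: inord 0]
  | k'.+1 => u m k' ++ inord k'.+1 :: u m k'
  end.

Lemma size_u m k : (size (u m k)).+1 = 2 ^ k.+1.
Proof.
elim: k => [|k IH] //=; rewrite size_cat /= expnS -IH; lia.
Qed.

Lemma u_letters m k : k <= m -> forall b, b \in u m k -> b <= k.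
Proof.
elim: k => [|k IH] Hk b /=.
  by rewrite inE => /eqP ->; rewrite inordK.
rewrite mem_cat inE => /orP[H|/orP[/eqP ->|H]].
- by apply: leq_trans (IH (ltnW Hk) _ H) _.
- by rewrite inordK.
- by apply: leq_trans (IH (ltnW Hk) _ H) _.
Qed.

Lemma u_even m k : k <= m -> forall j, j < size (u m k) -> ~~ odd j ->
  (nth ord0 (u m k) j : nat) = 0.
Proof.
elim: k => [|k IH] Hk j /=.
  by case: j => //= _ _; rewrite inordK.
have Hs := size_u m k.
rewrite size_cat /= nth_cat => Hj Hod.
case: ifP => Hjl; first exact: IH (ltnW Hk) _ Hjl Hod.
move/negbT: Hjl; rewrite -leqNgt => Hjl.
have Hne : j != size (u m k).
  apply/eqP => E; move: Hod; rewrite E.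
  have : odd (size (u m k)).+1 = false by rewrite Hs expnS oddM.
  by rewrite /= => /negbFE ->.
have Hlt : size (u m k) < j by rewrite ltn_neqAle eq_sym Hne Hjl.
have -> : j - size (u m k) = (j - (size (u m k)).+1).+1 by move: Hlt; clear; lia.
rewrite /=; apply: IH (ltnW Hk) _ _ _.
  by move: Hj Hlt; clear; lia.
move: Hod; have : ~~ odd (size (u m k)).+1 by rewrite Hs expnS oddM.
rewrite oddB //=; case: (odd j); case: (odd (size (u m k))) => //.
Qed.

Lemma acc_catl m q (X Y : seq 'I_m.+1) : all (fun b : 'I_m.+1 => b < q) X -> acc q (X ++ Y) = acc q Y.
Proof. by elim: X => [|b X IH] //= /andP[-> /IH]. Qed.

Lemma K_prefix m k : k <= m -> forall i, ~~ odd i -> i <= size (u m k) ->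
  acc (mx (take i (u m k))) (take i (u m k)).
Proof.
elim: k => [|k IH] Hk i Hod Hi.
  by move: Hi Hod; case: i => [|[|i]] //=.
have Hs := size_u m k.
case: (leqP i (size (u m k))) => Hi2.
  by rewrite /= takel_cat //; apply: IH => //; apply: ltnW.
set i' := i - (size (u m k)).+1.
have Ei : i = (size (u m k)).+1 + i' by rewrite /i'; lia.
have Hod' : ~~ odd i'.
  move: Hod; rewrite Ei oddD; have : ~~ odd (size (u m k)).+1 by rewrite Hs expnS oddM.
  by case: (odd (size (u m k)).+1).
move: Hi; rewrite /= size_cat /= => Hi.
have Hi' : i' <= size (u m k) by lia.
have HIH := IH (ltnW Hk) i' Hod' Hi'.
set t := take i' (u m k) in HIH.
have -> : take i (u m k ++ inord k.+1 :: u m k) = u m k ++ inord k.+1 :: t.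
  rewrite take_cat ltnNge (ltnW Hi2) /= -/(size _).
  have -> : i - size (u m k) = i'.+1 by rewrite /i'; lia.
  by [].
have Hlet : forall b, b \in u m k -> b <= k := u_letters (ltnW Hk).
have Hmt : mx t <= k.
  apply: mx_ub => b Hb; apply: Hlet; exact: (mem_subseq (take_subseq _ _) Hb).
have Hc : (inord k.+1 : 'I_m.+1) = k.+1 :> nat by rewrite inordK.
have -> : mx (u m k ++ inord k.+1 :: t) = k.+1.
  apply/eqP; rewrite eqn_leq; apply/andP; split.
    apply: mx_ub => b; rewrite mem_cat inE => /orP[H|/orP[/eqP ->|H]].
    - by apply: leqW; apply: Hlet.
    - by rewrite Hc.
    - by apply: leqW; apply: leq_trans Hmt; apply: mx_ge.
  by rewrite -{1}Hc; apply: mx_ge; rewrite mem_cat mem_head orbT.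
rewrite acc_catl; last by apply/allP => b Hb; rewrite ltnS; apply: Hlet.
rewrite /= Hc ltnn eqxx /=; apply/existsP; exists (inord (mx t)).
rewrite inordK; last by rewrite ltnS; apply: leq_trans Hmt _; apply: ltnW.
by rewrite ltnS Hmt.
Qed.

Lemma L_prefix m k : k <= m -> forall i, odd i -> i <= size (u m k) ->
  exists s, take i (u m k) = rcons s ord0.
Proof.
move=> Hk [|i] //= Hod Hi.
exists (take i (u m k)); rewrite (take_nth ord0) //; congr rcons.
by apply: val_inj; rewrite /= (u_even Hk Hi).
Qed.

Lemma disj m w : nfa_lang (NN m) w -> dfa_lang (DD m) w -> False.
Proof.
move=> /nlang [q Hq] /dlang [s E]; subst w.
case: s Hq => [|a s] Hq.
  by have := @acc_last m q ord0 [::] Hq.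
have := @acc_last m q a (rcons s ord0) Hq; by rewrite last_rcons.
Qed.

Lemma Kacc m w : nfa_lang (NN m) w -> acc (mx w) w.
Proof. by move=> /nlang [q Hq]; rewrite (acc_mx Hq). Qed.

Lemma accK m w : acc (mx w) w -> nfa_lang (NN m) w.
Proof.
move=> H; apply/nlang; exists (inord (mx w)); rewrite inordK //.
by rewrite ltnS mx_le_m.
Qed.

Lemma vl_le m w : nfa_lang (NN m) w -> vl w < 2 ^ m.+1.
Proof.
move=> /Kacc H; apply: leq_trans (V_bound H) _.
by rewrite leq_exp2l // ltnS mx_le_m.
Qed.

Theorem theorem9 (m : nat) :
  exists (N : nfa 'I_m.+1 m.+1) (D : dfa 'I_m.+1 2),
    (exists ws : seq (seq 'I_m.+1),
        size ws = 2 ^ m.+1 /\ is_tower (nfa_lang N) (dfa_lang D) ws) /\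
    ~ (exists w : nat -> seq 'I_m.+1, is_inf_tower (nfa_lang N) (dfa_lang D) w).
Proof.
exists (NN m), (DD m); split.
  have Hs := size_u m m.
  set U := u m m in Hs *.
  have HK : forall i, ~~ odd i -> i <= size U -> nfa_lang (NN m) (take i U).
    by move=> i Ho Hi; apply: accK; apply: K_prefix.
  have HL : forall i, odd i -> i <= size U -> dfa_lang (DD m) (take i U).
    by move=> i Ho Hi; apply/dlang; apply: L_prefix.
  exists [seq take i U | i <- iota 0 (2 ^ m.+1)].
  rewrite size_map size_iota; split => //; split; first by rewrite size_map size_iota expn_gt0.
  split.
    left; rewrite (nth_map 0) ?size_iota ?expn_gt0 // nth_iota ?expn_gt0 //.
    by apply: HK.
  move=> i; rewrite size_map size_iota => Hi.
  rewrite (nth_map 0) ?size_iota; last by apply: ltnW.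
  rewrite (nth_map 0) ?size_iota //.
  rewrite nth_iota; last by apply: ltnW.
  rewrite nth_iota //= !add0n.
  have Hi1 : i.+1 <= size U by rewrite -ltnS Hs.
  have Hi0 : i <= size U by apply: ltnW.
  split; first by rewrite -(take_takel U (leqnSn i)) take_subseq.
  split.
    case Ho: (odd i) => HKi.
      by exfalso; apply: (disj HKi); apply: HL.
    by apply: HL => //=; rewrite Ho.
  case Ho: (odd i) => HLi.
    by apply: HK => //=; rewrite Ho.
  by exfalso; apply: (disj _ HLi); apply: HK; rewrite ?Ho.
case=> w [H0 Hs].
have step : forall i, nfa_lang (NN m) (w i) ->
    nfa_lang (NN m) (w i.+2) /\ vl (w i) < vl (w i.+2).
  move=> i HKi.
  have [S1 [HA _]] := Hs i.
  have [S2 [_ HB]] := Hs i.+1.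
  have HL1 := HA HKi.
  have HK2 := HB HL1.
  split => //.
  have [s Es] := (dlang _).1 HL1.
  apply: (@main m m (w i) (w i.+2) (w i.+1)) => //.
  - exact: mx_le_m.
  - exact: Kacc.
  - exact: Kacc.
  - by rewrite Es; case: s {Es}.
  - by rewrite Es last_rcons.
have [i0 Hi0] : exists i0, nfa_lang (NN m) (w i0).
  case: H0 => H; first by exists 0.
  exists 1; have [_ [_ HB]] := Hs 0; exact: HB.
have Hind : forall n, nfa_lang (NN m) (w (i0 + n.*2)) /\ n <= vl (w (i0 + n.*2)).
  elim=> [|n [IH1 IH2]]; first by rewrite addn0.
  have [HK HV] := step _ IH1.
  rewrite doubleS addnS addnS; split => //.
  exact: leq_ltn_trans IH2 HV.
have [HK HV] := Hind (2 ^ m.+1).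
have := vl_le HK; rewrite ltnNge HV //.
Qed.
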